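(* Suppose the digraph $\mathcal{G}=(\mathcal{V},\mathcal{E})$ is strongly connected. Then each of the four matrices $$\sum_{(j,i)\in\mathcal{E}}p_{ij}(I-L_{ji})\otimes(I-L_{ji}),\quad \sum_{(j,i)\in\mathcal{E}}p_{ij}(I-L_{ji})\otimes S_{ji},\quad \sum_{(j,i)\in\mathcal{E}}p_{ij}S_{ji}\otimes(I-L_{ji}),\quad \sum_{(j,i)\in\mathcal{E}}p_{ij}S_{ji}\otimes S_{ji}$$ has $1$ as a simple eigenvalue, and all of its other eigenvalues have modulus strictly smaller than one.
   Context: Setting: $\mathcal{V}=\{1,\dots,n\}$, $n>1$, and $\mathcal{G}$ has no selfloops. To each edge $(j,i)\in\mathcal{E}$ are assigned $p_{ij}\in(0,1)$, with $\sum_{(j,i)\in\mathcal{E}}p_{ij}=1$, and $w_{ij}\in(0,1)$. Notation: $f_i$ is the $i$-th standard basis vector of $\mathbb{R}^n$ and $\otimes$ is the Kronecker product. For each edge $(j,i)$, $L_{ji}=w_{ij}f_if_i^T-w_{ij}f_if_j^T$ and $S_{ji}=I-(f_j-f_i)f_j^T$. *)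

(* Defs.v *)
From HB Require Import structures.
From mathcomp Require Import all_boot all_order all_algebra.
From mathcomp Require Import complex mxtens.
Set Implicit Arguments. Unset Strict Implicit. Unset Printing Implicit Defensive.
Import Order.TTheory GRing.Theory Num.Theory.
Local Open Scope ring_scope.

(* L_{ji} = w_ij f_i f_i^T - w_ij f_i f_j^T   (edge (j,i)) *)
Definition Lmx (R : pzRingType) (n : nat) (w : 'I_n -> 'I_n -> R) (j i : 'I_n)
  : 'M[R]_n := w i j *: delta_mx i i - w i j *: delta_mx i j.

(* S_{ji} = I - (f_j - f_i) f_j^T *)
Definition Smx (R : pzRingType) (n : nat) (j i : 'I_n) : 'M[R]_n :=
  1%:M - (delta_mx j j - delta_mx i j).

(* strong connectivity of the digraph with edge relation E (E j i <-> (j,i) in E) *)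
Definition strongly_connected (n : nat) (E : rel 'I_n) : Prop :=
  forall u v : 'I_n, connect E u v.

Definition cmx (R : rcfType) (m : nat) (A : 'M[R]_m) : 'M[R[i]]_m :=
  map_mx (fun x => x%:C%C) A.

Definition one_simple_dominant (R : rcfType) (m : nat) (A : 'M[R]_m) : Prop :=
  eigenvalue (cmx A) 1 /\ mup 1 (char_poly (cmx A)) = 1%N /\
  (forall lambda : R[i], eigenvalue (cmx A) lambda -> lambda != 1 -> `|lambda| < 1).

(* Main.v *)
Require Import Defs.
From HB Require Import structures.
From mathcomp Require Import all_boot all_order all_algebra.
From mathcomp Require Import complex mxtens.
Import Order.TTheory GRing.Theory Num.Theory.
Set Implicit Arguments. Unset Strict Implicit. Unset Printing Implicit Defensive.
Local Open Scope ring_scope.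

Lemma connect_inv (T : finType) (e : rel T) (a : pred T) :
  (forall x y, e x y -> a x -> a y) -> forall x y, connect e x y -> a x -> a y.
Proof.
move=> H x y /connectP [p pth ->{y}]; elim: p x pth => //= z p IH x /andP[exz pz] ax.
exact: IH pz (H _ _ exz ax).
Qed.

Lemma argmax_ex (R : realDomainType) (T : finType) (t0 : T) (f : T -> R) :
  exists k, forall l, f l <= f k.
Proof.
case: (@arg_maxP _ R T t0 xpredT f isT) => k _ H; exists k => l; exact: H.
Qed.

Lemma fixed_max (R : realFieldType) N (P : 'M[R]_N) (s : 'I_N) :
  (forall i j, 0 <= P i j) -> (forall i, \sum_j P i j = 1) ->
  (forall k, connect (fun a b => 0 < P a b) k s) ->
  forall y : 'cV_N, P *m y = y -> forall k, (forall l, y l 0 <= y k 0) ->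
  y s 0 = y k 0.
Proof.
move=> P0 P1 Pc y Py k kmax.
pose a := [pred i | y i 0 == y k 0].
have cl : forall i j, 0 < P i j -> a i -> a j.
  move=> i j Pij; rewrite !inE => /eqP ai.
  have e0 : \sum_l P i l * (y i 0 - y l 0) = 0.
    rewrite (eq_bigr (fun l => P i l * y i 0 - P i l * y l 0)) => [|l _]; last by rewrite mulrBr.
    rewrite sumrB -mulr_suml P1 mul1r.
    have : (P *m y) i 0 = y i 0 by rewrite Py.
    by rewrite mxE => ->; rewrite subrr.
  have H : forall l, true -> 0 <= P i l * (y i 0 - y l 0).
    by move=> l _; rewrite mulr_ge0 // subr_ge0 ai.
  move: (@psumr_eq0P _ _ xpredT (fun l => P i l * (y i 0 - y l 0)) H e0 j isT) => /eqP; rewrite mulf_eq0 (gt_eqF Pij) /= subr_eq0.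
  by move=> /eqP <-; rewrite ai.
apply/eqP; have := connect_inv cl (Pc k); rewrite !inE; apply; by [].
Qed.

Lemma fixed_const (R : realFieldType) N (P : 'M[R]_N) (s : 'I_N) :
  (forall i j, 0 <= P i j) -> (forall i, \sum_j P i j = 1) ->
  (forall k, connect (fun a b => 0 < P a b) k s) ->
  forall y : 'cV_N, P *m y = y -> forall i, y i 0 = y s 0.
Proof.
move=> P0 P1 Pc y Py i.
have [k kmax] := argmax_ex s (fun l => y l 0).
have [k' kmin] := argmax_ex s (fun l => (- y) l 0).
have e1 := fixed_max P0 P1 Pc Py kmax.
have e2 := fixed_max P0 P1 Pc (y := - y) (ltac:(by rewrite mulmxN Py)) kmin.
move: e2 (kmax i) (kmin i); rewrite !mxE e1 => /eqP; rewrite eqr_opp => /eqP ->.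
rewrite lerN2 => h1 h2; apply/eqP; by rewrite eq_le h1 h2.
Qed.

Lemma drift_le (R : realFieldType) N (P : 'M[R]_N) (s : 'I_N) :
  (forall i j, 0 <= P i j) -> (forall i, \sum_j P i j = 1) ->
  forall (x : 'cV_N) c, P *m x = x + c *: const_mx 1 -> c <= 0.
Proof.
move=> P0 P1 x c Px.
have [k kmax] := argmax_ex s (fun l => x l 0).
have : (P *m x) k 0 = x k 0 + c by rewrite Px !mxE mulr1.
rewrite mxE => e.
have : \sum_j P k j * x j 0 <= \sum_j P k j * x k 0.
  by apply: ler_sum => j _; rewrite ler_wpM2l.
by rewrite e -mulr_suml P1 mul1r gerDl.
Qed.

Lemma drift0 (R : realFieldType) N (P : 'M[R]_N) (s : 'I_N) :
  (forall i j, 0 <= P i j) -> (forall i, \sum_j P i j = 1) ->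
  forall (x : 'cV_N) c, P *m x = x + c *: const_mx 1 -> c = 0.
Proof.
move=> P0 P1 x c Px; apply/eqP; rewrite eq_le (drift_le s P0 P1 Px) /=.
rewrite -oppr_le0; apply: (drift_le s P0 P1 (x := - x)).
by rewrite mulmxN Px opprD scaleNr.
Qed.

Lemma char_poly_trmx (R : comNzRingType) n (A : 'M[R]_n) :
  char_poly A^T = char_poly A.
Proof.
rewrite /char_poly -det_tr; congr (\det _); apply/matrixP => i j.
by rewrite !mxE eq_sym.
Qed.

Lemma normC_argmax (R : rcfType) N (s : 'I_N) (u : 'I_N -> R[i]) :
  exists k, forall j, `|u j| <= `|u k|.
Proof.
have [k kmax] := argmax_ex s (fun j => complex.Re `|u j|).
exists k => j; rewrite -[`|u j|]RRe_real ?normr_real // -[`|u k|]RRe_real ?normr_real //.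
by rewrite lecR.
Qed.

Lemma spec_lt1 (R : rcfType) N (P : 'M[R]_N) (s : 'I_N) :
  (forall i j, 0 <= P i j) -> (forall i, \sum_j P i j = 1) -> 0 < P s s ->
  (forall k, connect (fun a b => 0 < P a b) k s) ->
  forall l : R[i], root (char_poly (cmx P)) l -> l != 1 -> `|l| < 1.
Proof.
move=> P0 P1 Pss Pc l; rewrite -char_poly_trmx -eigenvalue_root_char.
move=> /eigenvalueP [v vP vnz] l1.
pose Q k j := ((P k j)%:C)%C : R[i].
pose u j := v 0 j.
have eqk : forall k, \sum_j Q k j * u j = l * u k.
  move=> k; have := congr1 (fun M : 'M[R[i]]_(1,N) => M 0 k) vP; rewrite !mxE => <-.
  by apply: eq_bigr => j _; rewrite !mxE mulrC.
have Q0 : forall k j, 0 <= Q k j by move=> k j; rewrite ler0c.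
have Q1 : forall k, \sum_j Q k j = 1 by move=> k; rewrite -rmorph_sum P1.
have [k0 kmax] := normC_argmax s u.
set m := `|u k0|.
have mpos : 0 < m.
  case: (pickP (fun j => u j != 0)) => [j nz | H].
    by apply: lt_le_trans (kmax j); rewrite normr_gt0.
  case/negP: vnz; apply/eqP/rowP => j; rewrite mxE; move/negbFE: (H j) => /eqP.
  by rewrite /u => ->.
have bnd : forall k, \sum_j Q k j * `|u j| <= m.
  move=> k; apply: (@le_trans _ _ (\sum_j Q k j * m)).
    by apply: ler_sum => j _; rewrite ler_wpM2l.
  by rewrite -mulr_suml Q1 mul1r.
have tri : forall k, `|l| * `|u k| <= \sum_j Q k j * `|u j|.
  move=> k; rewrite -normrM -eqk (le_trans (ler_norm_sum _ _ _)) //.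
  by apply: ler_sum => j _; rewrite normrM ger0_norm.
have lle1 : `|l| <= 1.
  by rewrite -(ler_pM2r mpos) mul1r (le_trans (tri k0)).
rewrite lt_neqAle lle1 andbT; apply/negP => /eqP l_1.
pose a := [pred k | `|u k| == m].
have se : forall i, a i -> \sum_j Q i j * `|u j| = m.
  move=> i /eqP ui; apply/eqP; rewrite eq_le bnd /=.
  by have := tri i; rewrite l_1 ui mul1r.
have cl : forall i j, 0 < P i j -> a i -> a j.
  move=> i j Pij ai.
  have e0 : \sum_j Q i j * (m - `|u j|) = 0.
    rewrite (eq_bigr (fun j => Q i j * m - Q i j * `|u j|)) => [|j' _]; last by rewrite mulrBr.
    by rewrite sumrB -mulr_suml Q1 mul1r se // subrr.
  have H : forall j, xpredT j -> 0 <= Q i j * (m - `|u j|).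
    by move=> j' _; rewrite mulr_ge0 // subr_ge0 kmax.
  move: (@psumr_eq0P _ _ xpredT (fun j => Q i j * (m - `|u j|)) H e0 j isT) => /eqP.
  have Qij : 0 < Q i j by rewrite /Q ltcR.
  rewrite mulf_eq0 (gt_eqF Qij) /= subr_eq0 => /eqP mu.
  by rewrite /a /= -mu.
have as_ : a s by apply: (connect_inv cl (Pc k0)); rewrite inE.
have hs := se s as_.
have nrm : `|\sum_(j | xpredT j) Q s j * u j| = \sum_(j | xpredT j) `|Q s j * u j|.
  rewrite eqk normrM l_1 mul1r (eqP as_) -hs; apply: eq_bigr => j _.
  by rewrite normrM ger0_norm.
have [t t1 Ft] := normC_sum_eq nrm.
have Qs0 : Q s s != 0 by rewrite gt_eqF // /Q ltcR.
have us : u s = m * t.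
  have := Ft s isT; rewrite normrM ger0_norm // (eqP as_) -mulrA.
  by move/(mulfI Qs0).
have : l * u s = u s.
  rewrite -eqk (eq_bigr (fun j => `|Q s j * u j| * t)) => [|j _]; last exact: Ft.
  rewrite -mulr_suml.
  have -> : \sum_j `|Q s j * u j| = m.
    by rewrite -hs; apply: eq_bigr => j _; rewrite normrM ger0_norm.
  by rewrite us.
move/eqP; rewrite -{2}[u s]mul1r -subr_eq0 -mulrBl mulf_eq0 subr_eq0 (negPf l1) /=.
by rewrite -normr_eq0 (eqP as_) (gt_eqF mpos).
Qed.

Lemma char_poly_conj (R : fieldType) n (V A : 'M[R]_n) : V \in unitmx ->
  char_poly (invmx V *m A *m V) = char_poly A.
Proof.
move=> uV; rewrite /char_poly /char_poly_mx.
pose W (M : 'M[R]_n) := map_mx (@polyC R) M.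
have WV : W (invmx V) *m W V = 1 by rewrite /W -map_mxM mulVmx // map_mx1.
have -> : 'X%:M - map_mx polyC (invmx V *m A *m V) = W (invmx V) *m ('X%:M - W A) *m W V.
  rewrite /W in WV *; rewrite !map_mxM mulmxBr mulmxBl mul_mx_scalar -scalemxAl WV scalemx1.
  by [].
rewrite !det_mulmx mulrC mulrA -det_mulmx /W -map_mxM mulmxV // map_mx1 det1 mul1r //.
Qed.

Lemma char_poly_mx_block (R : nzRingType) m n (A : 'M[R]_m) B C (D : 'M[R]_n) :
  char_poly_mx (block_mx A B C D) =
  block_mx (char_poly_mx A) (- map_mx polyC B) (- map_mx polyC C) (char_poly_mx D).
Proof.
rewrite /char_poly_mx map_block_mx /= scalar_mx_block opp_block_mx add_block_mx.
by rewrite !add0r.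
Qed.

Lemma char_poly_ublock (R : comNzRingType) m n (A : 'M[R]_m) B (D : 'M[R]_n) :
  char_poly (block_mx A B 0 D) = char_poly A * char_poly D.
Proof. by rewrite /char_poly char_poly_mx_block map_mx0 oppr0 det_ublock. Qed.

Lemma stoch_factor (R : realFieldType) N' (P : 'M[R]_(1 + N')) (s : 'I_(1 + N')) :
  (forall i j, 0 <= P i j) -> (forall i, \sum_j P i j = 1) ->
  (forall k, connect (fun a b => 0 < P a b) k s) ->
  exists q : {poly R}, char_poly P = ('X - 1) * q /\ ~~ root q 1.
Proof.
move=> P0 P1 Pc.
pose T : 'M[R]_(1 + N') := \matrix_(i, j) ((j == ord0) || (i == j))%:R.
have Ttrig : is_trig_mx T.
  apply/is_trig_mxP => i j ij; rewrite mxE.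
  have -> : (j == ord0) = false by apply/negbTE; rewrite -val_eqE /= -lt0n (leq_ltn_trans _ ij).
  by rewrite -val_eqE /= (ltn_eqF ij).
have Tu : T \in unitmx.
  rewrite unitmxE det_trig // (eq_bigr (fun _ => 1)) => [|i _]; last by rewrite mxE eqxx orbT.
  by rewrite big1_eq unitr1.
pose e0 : 'cV[R]_(1 + N') := col_mx 1%:M 0.
have Te0 : T *m e0 = const_mx 1.
  apply/colP => i; rewrite !mxE big_split_ord /= big_ord1 big1 => [|j _].
    rewrite /e0 col_mxEu !mxE /=.
    by rewrite mulr1 addr0.
  by rewrite /e0 col_mxEd !mxE mulr0.
have P1' : P *m (const_mx 1 : 'cV[R]_(1 + N')) = const_mx 1.
  apply/colP => i; rewrite !mxE -[RHS](P1 i); apply: eq_bigr => j _; by rewrite !mxE mulr1.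
pose B := invmx T *m P *m T.
have Be0 : B *m e0 = e0 by rewrite /B -mulmxA Te0 -mulmxA P1' -Te0 mulKmx.
have TB : T *m B = P *m T by rewrite /B !mulmxA mulmxV // mul1mx.
have cB : char_poly B = char_poly P by rewrite /B char_poly_conj.
have BE : B = block_mx 1%:M (ursubmx B) 0 (drsubmx B).
  move: Be0; rewrite -{1}(submxK B) mul_block_col !mulmx1 !mulmx0 !addr0.
  by case/eq_col_mx => ul1 dl0; rewrite -{1}(submxK B) ul1 dl0.
exists (char_poly (drsubmx B)); split.
  rewrite -cB {1}BE char_poly_ublock; congr (_ * _).
  by rewrite /char_poly /char_poly_mx det_mx11 !mxE /= mulr1n.
apply/negP => rq; move: rq.
rewrite -char_poly_trmx -eigenvalue_root_char => /eigenvalueP [y yD ynz].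
set D := drsubmx B in yD BE; set U := ursubmx B in BE.
pose z : 'cV[R]_(1 + N') := col_mx 0 y^T.
pose c := (U *m y^T) 0 0.
have Bz : B *m z = z + c *: e0.
  rewrite BE mul_block_col !mulmx0 !add0r.
  have -> : D *m y^T = y^T by rewrite -[D]trmxK -trmx_mul yD scale1r.
  rewrite /e0 scale_col_mx scaler0 add_col_mx addr0 add0r scalemx1.
  by rewrite [U *m y^T]mx11_scalar.
pose x := T *m z.
have Px : P *m x = x + c *: const_mx 1.
  by rewrite /x mulmxA -TB -mulmxA Bz mulmxDr -scalemxAr Te0.
have c0 : c = 0 by apply: (drift0 s P0 P1 Px).
rewrite c0 scale0r addr0 in Px.
have xc := fixed_const P0 P1 Pc Px.
have : x = T *m (x s 0 *: e0).
  rewrite -scalemxAr Te0; apply/colP => i; rewrite [RHS]mxE [const_mx _ _ _]mxE mulr1; exact: xc.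
rewrite /x => /(congr1 (mulmx (invmx T))); rewrite !mulKmx // /z /e0 scale_col_mx.
case/eq_col_mx => _; rewrite scaler0 => /(congr1 trmx); rewrite trmxK trmx0.
by move=> y0; move: ynz; rewrite y0 eqxx.
Qed.

Lemma cmx_char (R : rcfType) m (A : 'M[R]_m) :
  char_poly (cmx A) = map_poly (fun x => x%:C%C) (char_poly A).
Proof. by rewrite map_char_poly. Qed.

Lemma core (R : rcfType) N (P : 'M[R]_N) (s : 'I_N) :
  (forall i j, 0 <= P i j) -> (forall i, \sum_j P i j = 1) -> 0 < P s s ->
  (forall k, connect (fun a b => 0 < P a b) k s) ->
  one_simple_dominant P.
Proof.
move=> P0 P1 Pss Pc.
have sp := spec_lt1 P0 P1 Pss Pc.
case: N => [|N'] in P s P0 P1 Pss Pc sp *; first by have := ltn_ord s.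
have [q [cq nq]] := @stoch_factor R N' P s P0 P1 Pc.
rewrite /one_simple_dominant !eigenvalue_root_char; split; last split.
- rewrite cmx_char cq rmorphM /= rootM; apply/orP; left.
  by rewrite rmorphB /= map_polyX rmorph1 root_XsubC.
- rewrite cmx_char cq rmorphM /= mupMl.
    by rewrite rmorphB /= map_polyX rmorph1 -polyC1 -[_ - _]expr1 mup_XsubCX eqxx.
  by rewrite -(rmorph1 (real_complex R)) fmorph_root.
- by move=> l; rewrite eigenvalue_root_char; apply: sp.
Qed.

Lemma osd_char (R : rcfType) m (A B : 'M[R]_m) :
  char_poly A = char_poly B -> one_simple_dominant B -> one_simple_dominant A.
Proof.
move=> e.
have eA : forall l, eigenvalue (cmx A) l = eigenvalue (cmx B) l.
  by move=> l; rewrite !eigenvalue_root_char !cmx_char e.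
move=> [h1 [h2 h3]]; split; first by rewrite eA.
split; first by rewrite cmx_char e -cmx_char.
by move=> l; rewrite eA; apply: h3.
Qed.

Lemma core_v (R : rcfType) N (M : 'M[R]_N) (v : 'I_N -> R) (s : 'I_N) :
  (forall i j, 0 <= M i j) -> (forall i, 0 < v i) ->
  (forall i, \sum_j M i j * v j = v i) -> 0 < M s s ->
  (forall k, connect (fun a b => 0 < M a b) k s) ->
  one_simple_dominant M.
Proof.
move=> M0 v0 Mv Mss Mc.
pose P : 'M[R]_N := \matrix_(i, j) ((v i)^-1 * M i j * v j).
pose D : 'M[R]_N := diag_mx (\row_i v i).
have Du : D \in unitmx.
  rewrite unitmxE det_diag unitfE; apply/prodf_neq0 => i _.
  by rewrite mxE gt_eqF.
have DP : D *m P = M *m D.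
  rewrite mul_diag_mx mul_mx_diag; apply/matrixP => i j; rewrite !mxE.
  by rewrite !mulrA mulfV ?mul1r // gt_eqF.
have PE : P = invmx D *m M *m D by rewrite -mulmxA -DP mulKmx.
apply: (osd_char (B := P)); first by rewrite PE char_poly_conj.
have rel : forall a b, (0 < P a b) = (0 < M a b).
  by move=> a b; rewrite mxE pmulr_lgt0 // pmulr_rgt0 // invr_gt0.
apply: (@core R N P s).
- move=> i j; rewrite mxE; apply: mulr_ge0; first apply: mulr_ge0.
  + by rewrite invr_ge0 ltW.
  + exact: M0.
  + exact: ltW.
- move=> i; rewrite (eq_bigr (fun j => (v i)^-1 * (M i j * v j))) => [|j _].
    by rewrite -mulr_sumr Mv mulVf // gt_eqF.
  by rewrite mxE mulrA.
- by rewrite rel.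
- by move=> k; rewrite (eq_connect (e' := fun a b => 0 < M a b)) //.
Qed.


Lemma ILE (R : pzRingType) n (w : 'I_n -> 'I_n -> R) (j i a c : 'I_n) :
  (1%:M - Lmx w j i) a c = (a == c)%:R - w i j * ((a == i) && (c == i))%:R
     + w i j * ((a == i) && (c == j))%:R.
Proof. by rewrite /Lmx !mxE opprD opprK addrA. Qed.

Lemma SE (R : pzRingType) n (j i a c : 'I_n) :
  Smx R j i a c = (a == c)%:R - ((a == j) && (c == j))%:R + ((a == i) && (c == j))%:R.
Proof. by rewrite /Smx !mxE opprD opprK addrA. Qed.

Lemma sum_ind (R : pzRingType) n (k : 'I_n) : \sum_(c < n) ((c == k)%:R : R) = 1.
Proof.
by rewrite (bigD1 k) //= eqxx big1 ?addr0 // => c /negPf ->.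
Qed.

Lemma sum_indl (R : pzRingType) n (k : 'I_n) (b : bool) :
  \sum_(c < n) ((b && (c == k))%:R : R) = b%:R.
Proof. by case: b; rewrite ?sum_ind // big1. Qed.

Lemma sum_indr (R : pzRingType) n (k : 'I_n) (b : bool) :
  \sum_(c < n) (((c == k) && b)%:R : R) = b%:R.
Proof. by rewrite -(sum_indl R k b); apply: eq_bigr => c _; rewrite andbC. Qed.




Lemma IL_row (R : pzRingType) n (w : 'I_n -> 'I_n -> R) (j i a : 'I_n) :
  \sum_c (1%:M - Lmx w j i) a c = 1.
Proof.
rewrite (eq_bigr _ (fun c _ => ILE w j i a c)) big_split sumrB -!mulr_sumr !sum_indl.
rewrite (eq_bigr (fun c => (c == a)%:R)) => [|c _]; last by rewrite eq_sym.
by rewrite sum_ind /= subrK.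
Qed.

Lemma S_col (R : pzRingType) n (j i c : 'I_n) :
  \sum_a Smx R j i a c = 1.
Proof.
rewrite (eq_bigr _ (fun a _ => SE R j i a c)) big_split sumrB !sum_indr.
by rewrite sum_ind /= subrK.
Qed.

Lemma IL_ge0 (R : realFieldType) n (w : 'I_n -> 'I_n -> R) (j i a c : 'I_n) :
  i != j -> 0 < w i j < 1 -> 0 <= (1%:M - Lmx w j i) a c.
Proof.
move=> ij /andP[w0 w1]; rewrite ILE.
case: (eqVneq a i) => [->|ai]; last by rewrite /= !mulr0 subr0 addr0 ler0n.
case: (eqVneq c i) => [->|ci]; rewrite ?eqxx ?(negPf ij) /=.
  rewrite mulr1 mulr0 addr0 subr_ge0; exact: ltW.
case: (eqVneq c j) => [_|cj]; rewrite /= ?mulr1 ?mulr0 ?subr0 ?addr0.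
  rewrite ?subrr ?add0r; exact: ltW.
by rewrite ?subrr ?add0r.
Qed.

Lemma IL_diag (R : realFieldType) n (w : 'I_n -> 'I_n -> R) (j i a : 'I_n) :
  i != j -> 0 < w i j < 1 -> 0 < (1%:M - Lmx w j i) a a.
Proof.
move=> ij /andP[w0 w1]; rewrite ILE eqxx.
case: (eqVneq a i) => [->|ai]; last by rewrite /= !mulr0 subr0 addr0 ltr01.
by rewrite ?eqxx (negPf ij) /= mulr1 mulr0 addr0 subr_gt0.
Qed.

Lemma IL_ij (R : realFieldType) n (w : 'I_n -> 'I_n -> R) (j i : 'I_n) :
  i != j -> 0 < w i j < 1 -> 0 < (1%:M - Lmx w j i) i j.
Proof.
move=> ij /andP[w0 w1]; rewrite ILE eqxx (negPf ij) eq_sym (negPf ij) /=.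
by rewrite eqxx mulr0 subr0 add0r mulr1.
Qed.

Lemma S_ge0 (R : realFieldType) n (j i a c : 'I_n) : 0 <= Smx R j i a c.
Proof.
rewrite SE; case: (eqVneq c j) => [->|cj].
  by rewrite !andbT subrr add0r ler0n.
by rewrite !andbF subr0 addr0 ler0n.
Qed.

Lemma S_diag (R : realFieldType) n (j i a : 'I_n) : a != j -> Smx R j i a a = 1.
Proof. by move=> aj; rewrite SE eqxx (negPf aj) /= andbF subr0 addr0. Qed.

Lemma S_ij (R : realFieldType) n (j i : 'I_n) : i != j -> Smx R j i i j = 1.
Proof. by move=> ij; rewrite SE (negPf ij) !eqxx /= subrr add0r. Qed.


Definition Ksum (R : pzRingType) n (E : rel 'I_n) (p : 'I_n -> 'I_n -> R)
  (A B : 'I_n -> 'I_n -> 'M[R]_n) : 'M[R]_(n * n) :=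
  \sum_(j < n) \sum_(i < n | E j i) p i j *: (A j i *t B j i).

Notation idx a b := (mxtens_index (a, b)).

Lemma KsumE (R : comPzRingType) n (E : rel 'I_n) p (A B : 'I_n -> 'I_n -> 'M[R]_n) a b c d :
  Ksum E p A B (idx a b) (idx c d) =
  \sum_(j < n) \sum_(i < n | E j i) p i j * (A j i a c * B j i b d).
Proof.
rewrite /Ksum summxE; apply: eq_bigr => j _; rewrite summxE; apply: eq_bigr => i _.
by rewrite mxE tensmxE.
Qed.

Lemma Ksum_ge0 (R : realFieldType) n (E : rel 'I_n) p (A B : 'I_n -> 'I_n -> 'M[R]_n) :
  (forall j i, E j i -> 0 <= p i j) ->
  (forall j i a c, E j i -> 0 <= A j i a c) ->
  (forall j i a c, E j i -> 0 <= B j i a c) ->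
  forall u v, 0 <= Ksum E p A B u v.
Proof.
move=> Hp HA HB u v; case: (mxtens_indexP u) => a b; case: (mxtens_indexP v) => c d.
rewrite KsumE; apply: sumr_ge0 => j _; apply: sumr_ge0 => i Eji.
by rewrite mulr_ge0 ?Hp // mulr_ge0 ?HA ?HB.
Qed.

Lemma Ksum_gt0 (R : realFieldType) n (E : rel 'I_n) p (A B : 'I_n -> 'I_n -> 'M[R]_n) :
  (forall j i, E j i -> 0 <= p i j) ->
  (forall j i a c, E j i -> 0 <= A j i a c) ->
  (forall j i a c, E j i -> 0 <= B j i a c) ->
  forall j i a b c d, E j i -> 0 < p i j -> 0 < A j i a c -> 0 < B j i b d ->
  0 < Ksum E p A B (idx a b) (idx c d).
Proof.
move=> Hp HA HB j i a b c d Eji pij Aac Bbd.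
have H0 : 0 < p i j * (A j i a c * B j i b d) by rewrite !mulr_gt0.
rewrite KsumE (bigD1 j) //= (bigD1 i) //=.
apply: (lt_le_trans H0); rewrite -addrA lerDl addr_ge0 //.
  apply: sumr_ge0 => i' /andP[Eji' _].
  by rewrite mulr_ge0 ?Hp // mulr_ge0 ?HA ?HB.
apply: sumr_ge0 => j' _; apply: sumr_ge0 => i' Eji'.
by rewrite mulr_ge0 ?Hp // mulr_ge0 ?HA ?HB.
Qed.

Lemma tensmxDr (R : pzRingType) m n p q (X : 'M[R]_(m, n)) (Y Z : 'M[R]_(p, q)) :
  X *t (Y + Z) = X *t Y + X *t Z.
Proof. by apply/matrixP => i j; rewrite !mxE mulrDr. Qed.

Lemma tensmxDl (R : pzRingType) m n p q (X Y : 'M[R]_(m, n)) (Z : 'M[R]_(p, q)) :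
  (X + Y) *t Z = X *t Z + Y *t Z.
Proof. by apply/matrixP => i j; rewrite !mxE mulrDl. Qed.

Lemma tensmxZr (R : comPzRingType) m n p q (X : 'M[R]_(m, n)) (c : R) (Y : 'M[R]_(p, q)) :
  X *t (c *: Y) = c *: (X *t Y).
Proof. by apply/matrixP => i j; rewrite !mxE mulrCA. Qed.

Lemma tensmxZl (R : comPzRingType) m n p q (X : 'M[R]_(m, n)) (c : R) (Y : 'M[R]_(p, q)) :
  (c *: X) *t Y = c *: (X *t Y).
Proof. by apply/matrixP => i j; rewrite !mxE mulrA. Qed.

Lemma tens_sumr (R : comPzRingType) m n p q (I : finType) (P : pred I)
  (X : 'M[R]_(m, n)) (F : I -> 'M[R]_(p, q)) :
  X *t (\sum_(k | P k) F k) = \sum_(k | P k) X *t F k.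
Proof.
apply: (big_morph (fun Y => X *t Y)); first exact: tensmxDr.
exact: tensmx0.
Qed.

Lemma tens_suml (R : comPzRingType) m n p q (I : finType) (P : pred I)
  (X : 'M[R]_(p, q)) (F : I -> 'M[R]_(m, n)) :
  (\sum_(k | P k) F k) *t X = \sum_(k | P k) F k *t X.
Proof.
apply: (big_morph (fun Y => Y *t X)); first by move=> Y Z; exact: tensmxDl.
exact: tens0mx.
Qed.

Lemma Ksum_mul (R : comPzRingType) n (E : rel 'I_n) p (A B : 'I_n -> 'I_n -> 'M[R]_n)
  (X Y : 'cV[R]_n) :
  Ksum E p A B *m (X *t Y) =
  \sum_(j < n) \sum_(i < n | E j i) p i j *: ((A j i *m X) *t (B j i *m Y)).
Proof.
rewrite /Ksum mulmx_suml; apply: eq_bigr => j _; rewrite mulmx_suml.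
by apply: eq_bigr => i _; rewrite -scalemxAl tensmx_mul.
Qed.


Lemma perron_S (R : rcfType) n (E : rel 'I_n) (p : 'I_n -> 'I_n -> R) (a0 : 'I_n) :
  (forall i : 'I_n, ~~ E i i) ->
  (forall j i : 'I_n, E j i -> 0 < p i j) ->
  \sum_(j < n) \sum_(i < n | E j i) p i j = 1 ->
  strongly_connected E ->
  exists pi : 'cV[R]_n,
    (\sum_(j < n) \sum_(i < n | E j i) p i j *: Smx R j i) *m pi = pi /\
    forall a, 0 < pi a 0.
Proof.
move=> Hl Hp Hs Hc.
set Q := \sum_(j < n) \sum_(i < n | E j i) p i j *: Smx R j i.
have QE : forall a c, Q a c = \sum_(j < n) \sum_(i < n | E j i) p i j * Smx R j i a c.
  move=> a c; rewrite /Q summxE; apply: eq_bigr => j _; rewrite summxE.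
  by apply: eq_bigr => i _; rewrite mxE.
have Q0 : forall a c, 0 <= Q a c.
  move=> a c; rewrite QE; apply: sumr_ge0 => j _; apply: sumr_ge0 => i Eji.
  by rewrite mulr_ge0 ?S_ge0 // ltW // Hp.
have Qcol : forall c, \sum_a Q a c = 1.
  move=> c; rewrite -Hs (eq_bigr _ (fun a _ => QE a c)) exchange_big /=.
  apply: eq_bigr => j _; rewrite exchange_big /=; apply: eq_bigr => i _.
  by rewrite -mulr_sumr S_col mulr1.
have Qpos : forall j i, E j i -> 0 < Q i j.
  move=> j i Eji; have ij : i != j by apply/eqP => eij; move: Eji (Hl i); rewrite eij => ->.
  rewrite QE (bigD1 j) //= (bigD1 i) //= S_ij // mulr1.
  rewrite -addrA ltr_pwDl ?Hp // addr_ge0 //.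
    by apply: sumr_ge0 => i' /andP[Eji' _]; rewrite mulr_ge0 ?S_ge0 // ltW // Hp.
  by apply: sumr_ge0 => j' _; apply: sumr_ge0 => i' Eji'; rewrite mulr_ge0 ?S_ge0 // ltW // Hp.
have ones : (const_mx 1 : 'rV[R]_n) *m (Q - 1%:M) = 0.
  apply/rowP => c; rewrite !mxE (eq_bigr (fun a => Q a c - (a == c)%:R)) => [|a _].
    rewrite sumrB Qcol (eq_bigr (fun a => (a == c)%:R)) // sum_ind subrr //.
  by rewrite !mxE mul1r.
have d0 : \det (Q - 1%:M)^T == 0.
  rewrite det_tr; apply/det0P; exists (const_mx 1) => //; apply/eqP => h.
  by have := congr1 (fun r : 'rV_n => r 0 a0) h; rewrite !mxE; apply/eqP; rewrite oner_eq0.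
case/det0P: d0 => u unz hu.
pose pi0 := u^T.
have Qpi0 : Q *m pi0 = pi0.
  have := congr1 trmx hu; rewrite trmx_mul trmxK trmx0 mulmxBl mul1mx.
  by move/eqP; rewrite subr_eq0 => /eqP.
pose f a := `|pi0 a 0|.
have ge : forall a, f a <= \sum_c Q a c * f c.
  move=> a; have : (Q *m pi0) a 0 = pi0 a 0 by rewrite Qpi0.
  rewrite mxE => e; rewrite /f -{1}e (le_trans (ler_norm_sum _ _ _)) //.
  by apply: ler_sum => c _; rewrite normrM ger0_norm.
have eqs : forall a, \sum_c Q a c * f c = f a.
  have tot : \sum_a (\sum_c Q a c * f c - f a) = 0.
    rewrite sumrB exchange_big /= (eq_bigr (fun c => f c)) ?subrr // => c _.
    by rewrite -mulr_suml Qcol mul1r.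
  have H : forall a, xpredT a -> 0 <= \sum_c Q a c * f c - f a.
    by move=> a _; rewrite subr_ge0 ge.
  move=> a; move: (@psumr_eq0P _ _ xpredT (fun a => \sum_c Q a c * f c - f a) H tot a isT).
  by move/eqP; rewrite subr_eq0 => /eqP.
pose rho := \col_a f a.
have Qrho : Q *m rho = rho.
  apply/colP => a; rewrite !mxE -eqs; apply: eq_bigr => c _; by rewrite mxE.
have [z fz] : exists z, 0 < f z.
  case: (pickP (fun j => u 0 j != 0)) => [j nz | H].
    by exists j; rewrite /f /pi0 mxE normr_gt0.
  case/negP: unz; apply/eqP/rowP => j; rewrite mxE; move/negbFE: (H j) => /eqP //.
have zero : forall x y, [rel a b | E b a] x y -> f x = 0 -> f y = 0.
  move=> x y /= Eyx fx; have := eqs x; rewrite fx => e.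
  have H : forall c, xpredT c -> 0 <= Q x c * f c by move=> c _; apply: mulr_ge0; rewrite ?Q0 // /f normr_ge0.
  move: (@psumr_eq0P _ _ xpredT (fun c => Q x c * f c) H e y isT) => /eqP.
  by rewrite mulf_eq0 (gt_eqF (Qpos _ _ Eyx)) /= => /eqP.
have pos : forall x, 0 < f x.
  move=> x; rewrite lt_def normr_ge0 andbT; apply/eqP => fx0.
  have cxz : connect [rel a b | E b a] x z by rewrite connect_rev; apply: Hc.
  have cl : forall a b, [rel a b | E b a] a b -> (fun y => f y == 0) a -> (fun y => f y == 0) b.
    by move=> a b ab /eqP fa; apply/eqP; apply: zero ab fa.
  by have := connect_inv cl cxz; rewrite /= fx0 eqxx (gt_eqF fz) => /(_ isT).
by exists rho; split => // a; rewrite mxE.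
Qed.


Lemma core_V (R : rcfType) N (M : 'M[R]_N) (V : 'cV[R]_N) (s : 'I_N) :
  (forall i j, 0 <= M i j) -> (forall i, 0 < V i 0) -> M *m V = V -> 0 < M s s ->
  (forall k, connect (fun a b => 0 < M a b) k s) ->
  one_simple_dominant M.
Proof.
move=> M0 V0 MV Mss Mc; apply: (core_v (v := fun i => V i 0)) Mss Mc => // i.
by have := congr1 (fun W : 'cV_N => W i 0) MV; rewrite mxE.
Qed.

Lemma connect_map (T U : finType) (e : rel T) (e' : rel U) (f : T -> U) :
  (forall x y, e x y -> e' (f x) (f y)) ->
  forall x y, connect e x y -> connect e' (f x) (f y).
Proof.
move=> H x y cxy.
have cl : forall u w, e u w -> (fun z => connect e' (f x) (f z)) u ->
    (fun z => connect e' (f x) (f z)) w.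
  by move=> u w euw /= cu; apply: connect_trans cu (connect1 (H _ _ euw)).
exact: (connect_inv cl cxy (connect0 _ _)).
Qed.

Lemma connect_map_rev (T U : finType) (e : rel T) (e' : rel U) (f : T -> U) :
  (forall x y, e x y -> e' (f y) (f x)) ->
  forall x y, connect e x y -> connect e' (f y) (f x).
Proof.
move=> H x y cxy.
have c' : connect [rel a b | e b a] y x by rewrite connect_rev.
by apply: (connect_map _ c') => a b /= eba; apply: H.
Qed.

Lemma tensV (R : comPzRingType) n (X Y : 'cV[R]_n) a b (k : 'I_(1 * 1)) :
  (X *t Y) (idx a b) k = X a 0 * Y b 0.
Proof. by rewrite mxE mxtens_indexK /= !ord1. Qed.

Lemma pair_osd (R : rcfType) n (E : rel 'I_n) p (A B : 'I_n -> 'I_n -> 'M[R]_n)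
  (X Y : 'cV[R]_n) (t : 'I_n) :
  (forall j i, E j i -> 0 <= p i j) ->
  (forall j i a c, E j i -> 0 <= A j i a c) ->
  (forall j i a c, E j i -> 0 <= B j i a c) ->
  (forall a, 0 < X a 0) -> (forall a, 0 < Y a 0) ->
  Ksum E p A B *m (X *t Y) = X *t Y ->
  0 < Ksum E p A B (idx t t) (idx t t) ->
  (forall a b, connect (fun u v => 0 < Ksum E p A B u v) (idx a b) (idx t t)) ->
  one_simple_dominant (Ksum E p A B).
Proof.
move=> Hp HA HB X0 Y0 KV Ktt Kc.
apply: (core_V (V := X *t Y)) KV Ktt _.
- exact: Ksum_ge0.
- by move=> u; case: (mxtens_indexP u) => a b; rewrite tensV mulr_gt0.
- by move=> u; case: (mxtens_indexP u) => a b.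
Qed.


Lemma Ksum_tr (R : comPzRingType) n (E : rel 'I_n) p (A B : 'I_n -> 'I_n -> 'M[R]_n) :
  (Ksum E p A B)^T = Ksum E p (fun j i => (A j i)^T) (fun j i => (B j i)^T).
Proof.
apply/matrixP => u v; case: (mxtens_indexP u) => a b; case: (mxtens_indexP v) => c d.
rewrite mxE !KsumE; apply: eq_bigr => j _; apply: eq_bigr => i _; by rewrite !mxE.
Qed.

Theorem lemma6 (R : rcfType) (n : nat) (E : rel 'I_n)
    (p w : 'I_n -> 'I_n -> R) :
  (1 < n)%N ->
  (forall i : 'I_n, ~~ E i i) ->
  (forall j i : 'I_n, E j i -> 0 < p i j < 1) ->
  \sum_(j < n) \sum_(i < n | E j i) p i j = 1 ->
  (forall j i : 'I_n, E j i -> 0 < w i j < 1) ->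
  strongly_connected E ->
  let IL j i := 1%:M - Lmx w j i in
  [/\ one_simple_dominant (\sum_(j < n) \sum_(i < n | E j i)
                              p i j *: (IL j i *t IL j i)),
      one_simple_dominant (\sum_(j < n) \sum_(i < n | E j i)
                              p i j *: (IL j i *t Smx R j i)),
      one_simple_dominant (\sum_(j < n) \sum_(i < n | E j i)
                              p i j *: (Smx R j i *t IL j i))
    & one_simple_dominant (\sum_(j < n) \sum_(i < n | E j i)
                              p i j *: (Smx R j i *t Smx R j i))].
Proof.
move=> n1 Hl Hp Hs Hw Hc IL.
have Hp0 : forall j i, E j i -> 0 <= p i j by move=> j i /Hp /andP[/ltW].
have Hpp : forall j i, E j i -> 0 < p i j by move=> j i /Hp /andP[].
have Hne : forall j i, E j i -> i != j.
  by move=> j i Eji; apply/eqP => eij; move: Eji (Hl i); rewrite eij => ->.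
have [j0 [i0 E0]] : exists j i, E j i.
  case: (pickP (fun ji : 'I_n * 'I_n => E ji.1 ji.2)) => [[j i] /= Eji | H].
    by exists j, i.
  move: Hs; rewrite big1 => [|j _]; first by move/eqP; rewrite eq_sym oner_eq0.
  by rewrite big_pred0 // => i; exact: (H (j, i)).
have t0 : i0 != j0 := Hne _ _ E0.
have ILnn : forall j i a c, E j i -> 0 <= IL j i a c.
  by move=> j i a c Eji; apply: IL_ge0; [exact: Hne | exact: Hw].
have ILd : forall j i a, E j i -> 0 < IL j i a a.
  by move=> j i a Eji; apply: IL_diag; [exact: Hne | exact: Hw].
have ILij : forall j i, E j i -> 0 < IL j i i j.
  by move=> j i Eji; apply: IL_ij; [exact: Hne | exact: Hw].
have Snn : forall j i a c, E j i -> 0 <= Smx R j i a c by move=> *; exact: S_ge0.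
have Sij : forall j i, E j i -> 0 < Smx R j i i j.
  by move=> j i Eji; rewrite S_ij ?ltr01 //; exact: Hne.
pose one : 'cV[R]_n := const_mx 1.
have one0 : forall a, 0 < one a 0 by move=> a; rewrite mxE ltr01.
have ILone : forall j i, IL j i *m one = one.
  move=> j i; apply/colP => a; rewrite [RHS]mxE mxE -[RHS](IL_row w j i a).
  by apply: eq_bigr => c _; rewrite /one [const_mx _ _ _]mxE mulr1.
have [pi [Qpi pipos]] := perron_S i0 Hl Hpp Hs Hc.
split.
- apply: (@pair_osd R n E p IL IL one one i0) => //.
  + rewrite Ksum_mul (eq_bigr (fun j => (\sum_(i | E j i) p i j) *: (one *t one))).
      by rewrite -scaler_suml Hs scale1r.
    by move=> j _; rewrite scaler_suml; apply: eq_bigr => i _; rewrite !ILone.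
  + by apply: (Ksum_gt0 Hp0 ILnn ILnn E0); rewrite ?Hpp ?ILd.
  + move=> a b; apply: (connect_trans (y := idx b b)).
      apply: (connect_map_rev (f := fun z => idx z b) _ (Hc b a)) => x y Exy.
      by apply: (Ksum_gt0 Hp0 ILnn ILnn Exy); rewrite ?Hpp ?ILd ?ILij.
    apply: (connect_map_rev (f := fun z => idx z z) _ (Hc i0 b)) => x y Exy.
    by apply: (Ksum_gt0 Hp0 ILnn ILnn Exy); rewrite ?Hpp ?ILd ?ILij.
- apply: (@pair_osd R n E p IL (fun j i => Smx R j i) one pi i0) => //.
  + rewrite Ksum_mul -[in RHS]Qpi mulmx_suml tens_sumr; apply: eq_bigr => j _.
    rewrite mulmx_suml tens_sumr; apply: eq_bigr => i _.
    by rewrite ILone -scalemxAl tensmxZr.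
  + by apply: (Ksum_gt0 Hp0 ILnn Snn E0); rewrite ?Hpp ?ILd // S_diag ?ltr01.
  + move=> a b; apply: (connect_trans (y := idx a a)).
      apply: (connect_map_rev (f := fun z => idx a z) _ (Hc a b)) => x y Exy.
      by apply: (Ksum_gt0 Hp0 ILnn Snn Exy); rewrite ?Hpp ?ILd ?Sij.
    apply: (connect_map_rev (f := fun z => idx z z) _ (Hc i0 a)) => x y Exy.
    by apply: (Ksum_gt0 Hp0 ILnn Snn Exy); rewrite ?Hpp ?ILij ?Sij.
- apply: (@pair_osd R n E p (fun j i => Smx R j i) IL pi one i0) => //.
  + rewrite Ksum_mul -[in RHS]Qpi mulmx_suml tens_suml; apply: eq_bigr => j _.
    rewrite mulmx_suml tens_suml; apply: eq_bigr => i _.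
    by rewrite ILone -scalemxAl tensmxZl.
  + by apply: (Ksum_gt0 Hp0 Snn ILnn E0); rewrite ?Hpp ?ILd // S_diag ?ltr01.
  + move=> a b; apply: (connect_trans (y := idx b b)).
      apply: (connect_map_rev (f := fun z => idx z b) _ (Hc b a)) => x y Exy.
      by apply: (Ksum_gt0 Hp0 Snn ILnn Exy); rewrite ?Hpp ?ILd ?Sij.
    apply: (connect_map_rev (f := fun z => idx z z) _ (Hc i0 b)) => x y Exy.
    by apply: (Ksum_gt0 Hp0 Snn ILnn Exy); rewrite ?Hpp ?ILij ?Sij.
- apply: (osd_char (B := (Ksum E p (fun j i => Smx R j i) (fun j i => Smx R j i))^T)).
    by rewrite char_poly_trmx.
  rewrite Ksum_tr.
  pose ST (j i : 'I_n) : 'M[R]_n := (Smx R j i)^T.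
  have STnn : forall j i a c, E j i -> 0 <= ST j i a c by move=> j i a c _; rewrite mxE S_ge0.
  have STone : forall j i, ST j i *m one = one.
    move=> j i; apply/colP => a; rewrite [RHS]mxE mxE -[RHS](S_col R j i a).
    by apply: eq_bigr => c _; rewrite /one [const_mx _ _ _]mxE mulr1 mxE.
  have STij : forall j i, E j i -> 0 < ST j i j i by move=> j i Eji; rewrite mxE Sij.
  have STd : forall j i a, a != j -> 0 < ST j i a a by move=> j i a aj; rewrite mxE S_diag ?ltr01.
  apply: (@pair_osd R n E p ST ST one one i0) => //.
  + rewrite Ksum_mul (eq_bigr (fun j => (\sum_(i | E j i) p i j) *: (one *t one))).
      by rewrite -scaler_suml Hs scale1r.
    by move=> j _; rewrite scaler_suml; apply: eq_bigr => i _; rewrite !STone.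
  + by apply: (Ksum_gt0 Hp0 STnn STnn E0); rewrite ?Hpp ?STd.
  + move=> a b; apply: (connect_trans (y := idx b b)).
      pose P z := connect (fun u v => 0 < Ksum E p ST ST u v) (idx z b) (idx b b).
      have cl : forall u v, [rel x y | E y x] u v -> P u -> P v.
        move=> u v /= Evu cu; case: (eqVneq v b) => [->|vb]; first exact: connect0.
        apply: (connect_trans (connect1 _) cu) => /=.
        apply: (Ksum_gt0 Hp0 STnn STnn Evu); [exact: Hpp | exact: STij | by apply: STd; rewrite eq_sym].
      have cba : connect [rel x y | E y x] b a by rewrite connect_rev; apply: Hc.
      exact: (connect_inv cl cba (connect0 _ _)).
    apply: (connect_map (f := fun z => idx z z) _ (Hc b i0)) => x y Exy.
    by apply: (Ksum_gt0 Hp0 STnn STnn Exy); rewrite ?Hpp ?STij.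
Qed.
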